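(* Let $L\subseteq\Sigma^*$ be a regular language. Then $N^1(L)=O(1)$ if and only if $L\in\mathcal{C}om(\Sigma)$ (i.e. its syntactic monoid is commutative); otherwise $N^1(L)=\Omega(\log n)$.
   Context: Non-deterministic communication complexity: for $f:X\times Y\to\{0,1\}$, $N^1(f)$ is the minimum cost of a non-deterministic protocol for $f$; equivalently, up to an additive constant 2, $N^1(f)=\log_2 C^1(f)$, where $C^1(f)$ is the minimum number of rectangles $S\times T\subseteq X\times Y$ on which $f\equiv1$ whose union is $f^{-1}(1)$. For a language $L\subseteq\Sigma^*$, $N^1(L)(n)$ is $N^1$ of the function in which Alice receives $a_1,a_3,\dots,a_{2n-1}$, Bob receives $a_2,a_4,\dots,a_{2n}$, each $a_i\in\Sigma\cup\{\epsilon\}$ ($\epsilon$ the empty word), and the value is $1$ iff $a_1a_2\cdots a_{2n}\in L$. The syntactic monoid of $L$ is $\Sigma^*/\equiv_L$ where $x\equiv_L y$ iff for all $u,v\in\Sigma^*$, $uxv\in L\Leftrightarrow uyv\in L$. $\mathcal{C}om(\Sigma)$ denotes the set of regular languages over $\Sigma$ whose syntactic monoid is commutative. Asymptotics are as $n\to\infty$. *)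

(* Defs.v *)
From mathcomp Require Import all_boot.
Set Implicit Arguments. Unset Strict Implicit. Unset Printing Implicit Defensive.

Record dfa (S : finType) := Dfa {
  dfa_state : finType;
  dfa_start : dfa_state;
  dfa_step : dfa_state -> S -> dfa_state;
  dfa_accept : pred dfa_state }.

Definition dfa_accepts (S : finType) (A : dfa S) (w : seq S) : bool :=
  @dfa_accept S A (foldl (@dfa_step S A) (@dfa_start S A) w).

Definition regular (S : finType) (L : seq S -> bool) : Prop :=
  exists A : dfa S, forall w, L w = dfa_accepts A w.

(* Syntactic congruence and commutativity of the syntactic monoid:
   Sigma^*/=_L is commutative iff xy =_L yx for all words x, y. *)
Definition synt_equiv (S : finType) (L : seq S -> bool) (x y : seq S) : Prop :=
  forall u v : seq S, L (u ++ x ++ v) = L (u ++ y ++ v).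

Definition in_Com (S : finType) (L : seq S -> bool) : Prop :=
  forall x y : seq S, synt_equiv L (x ++ y) (y ++ x).

Definition is_one_cover (X Y : finType) (f : X -> Y -> bool)
    (R : {set {set X} * {set Y}}) : bool :=
  [forall r in R, forall x in r.1, forall y in r.2, f x y] &&
  [forall x, forall y, f x y ==> [exists r in R, (x \in r.1) && (y \in r.2)]].

Definition C1 (X Y : finType) (f : X -> Y -> bool) : nat :=
  \big[minn/#|{: {set X} * {set Y}}|]_(R : {set {set X} * {set Y}} | is_one_cover f R) #|R|.

(* N^1(f) := ceil(log2 C^1(f)); equal to the protocol cost up to an additive constant. *)
Definition N1 (X Y : finType) (f : X -> Y -> bool) : nat := up_log 2 (C1 f).

(* Input of length 2n: Alice holds a_1,a_3,..., Bob a_2,a_4,...; None = epsilon. *)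
Definition oword (S : Type) (o : option S) : seq S :=
  if o is Some a then [:: a] else [::].

Definition interleave (S : finType) (n : nat)
    (x y : {ffun 'I_n -> option S}) : seq S :=
  flatten [seq oword (x i) ++ oword (y i) | i <- enum 'I_n].

Definition N1L (S : finType) (L : seq S -> bool) (n : nat) : nat :=
  N1 (fun x y : {ffun 'I_n -> option S} => L (interleave x y)).

Definition bounded (g : nat -> nat) : Prop := exists B, forall n, g n <= B.

Definition omega_log (g : nat -> nat) : Prop :=
  exists c N0 : nat, forall n, N0 <= n -> trunc_log 2 n <= c * g n.

(* Main.v *)
Require Import Defs.
From mathcomp Require Import all_boot zify.
From Stdlib Require Import Classical.
Set Implicit Arguments. Unset Strict Implicit. Unset Printing Implicit Defensive.

Section IL.
Variable S : finType.

Definition hh (p : option S * option S) : seq S := oword p.1 ++ oword p.2.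
Definition il (A B : seq (option S)) : seq S := flatten (map hh (zip A B)).

Lemma il_cat A1 A2 B1 B2 : size A1 = size B1 ->
  il (A1 ++ A2) (B1 ++ B2) = il A1 B1 ++ il A2 B2.
Proof. by move=> H; rewrite /il zip_cat // map_cat flatten_cat. Qed.

Lemma il_SN w : il (map Some w) (nseq (size w) None) = w.
Proof. by elim: w => //= a w IH; rewrite /il /= -/(il _ _) IH. Qed.

Lemma il_NS w : il (nseq (size w) None) (map Some w) = w.
Proof. by elim: w => //= a w IH; rewrite /il /= -/(il _ _) IH. Qed.

Lemma il_NN k : il (nseq k None) (nseq k None) = [::].
Proof. by elim: k => //= k IH; rewrite /il /= -/(il _ _) IH. Qed.

Lemma il_flat (s : seq nat) (f g : nat -> seq (option S)) :
  (forall j, size (f j) = size (g j)) ->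
  il (flatten (map f s)) (flatten (map g s)) = flatten (map (fun j => il (f j) (g j)) s)
  /\ size (flatten (map f s)) = size (flatten (map g s)).
Proof.
move=> H; elim: s => [|j s [IH1 IH2]] //=.
by rewrite il_cat ?H // IH1 !size_cat H IH2.
Qed.

Lemma size_flat (s : seq nat) (f : nat -> seq (option S)) K :
  (forall j, size (f j) = K) -> size (flatten (map f s)) = size s * K.
Proof. by move=> H; elim: s => //= j s IH; rewrite size_cat H IH mulSn. Qed.

Lemma zip_nth (A B : seq (option S)) n : size A = n -> size B = n ->
  zip A B = map (fun i => (nth None A i, nth None B i)) (iota 0 n).
Proof.
move=> HA HB; apply: (@eq_from_nth _ (None, None)).
  by rewrite size_zip size_map size_iota HA HB minnn.
move=> i; rewrite size_zip HA HB minnn => Hi.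
by rewrite nth_zip ?HA ?HB // (nth_map 0) ?size_iota // nth_iota.
Qed.

Lemma interleave_il n (A B : seq (option S)) : size A = n -> size B = n ->
  interleave [ffun i : 'I_n => nth None A i] [ffun i : 'I_n => nth None B i] = il A B.
Proof.
move=> HA HB; rewrite /interleave /il (zip_nth HA HB) -map_comp.
rewrite -val_enum_ord -map_comp; congr flatten; apply: eq_map => i /=.
by rewrite !ffunE.
Qed.

Lemma il_SN' w n : n = size w -> il (map Some w) (nseq n None) = w.
Proof. by move=> ->; exact: il_SN. Qed.
Lemma il_NS' w n : n = size w -> il (nseq n None) (map Some w) = w.
Proof. by move=> ->; exact: il_NS. Qed.

End IL.

Section Blocks.
Variable S : finType.
Variables x y : seq S.

Definition blockA (b : bool) : seq (option S) :=
  if b then map Some x ++ nseq (size y) None else nseq (size x + size y) None.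
Definition blockB (b : bool) : seq (option S) :=
  if b then nseq (size x) None ++ map Some y else nseq (size x + size y) None.

Lemma size_blockA b : size (blockA b) = size x + size y.
Proof. by case: b; rewrite /blockA ?size_cat ?size_map ?size_nseq. Qed.
Lemma size_blockB b : size (blockB b) = size x + size y.
Proof. by case: b; rewrite /blockB ?size_cat ?size_map ?size_nseq. Qed.

Lemma il_block b1 b2 : il (blockA b1) (blockB b2) =
  (if b1 then x else [::]) ++ (if b2 then y else [::]).
Proof.
case: b1; case: b2; rewrite /blockA /blockB ?nseqD.
- by rewrite il_cat ?size_map ?size_nseq // il_SN' // il_NS'.
- by rewrite il_cat ?size_map ?size_nseq // il_SN' // il_NN.
- by rewrite il_cat ?size_map ?size_nseq // il_NN il_NS'.
- by rewrite il_cat ?size_nseq // !il_NN.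
Qed.

Definition FF k l m : seq S :=
  flatten [seq (if j == k then x else [::]) ++ (if j == l then y else [::]) | j <- iota 0 m].

Lemma FF_gen k l m : FF k l m =
  if k <= l then (if k < m then x else [::]) ++ (if l < m then y else [::])
  else (if l < m then y else [::]) ++ (if k < m then x else [::]).
Proof.
elim: m => [|m IH]; first by rewrite /FF /=; case: ifP.
rewrite /FF -addn1 iotaD map_cat flatten_cat -/(FF k l m) IH /= cats0 add0n.
have E1 : (k < m + 1) = (k < m) || (m == k) by lia.
have E2 : (l < m + 1) = (l < m) || (m == l) by lia.
rewrite E1 E2.
case: (leqP k l) => Hkl; case: (ltnP k m) => Hk; case: (ltnP l m) => Hl;
  case: (eqVneq m k) => Emk; case: (eqVneq m l) => Eml; rewrite /= ?cats0 ?catA //; lia.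
Qed.

Lemma FF_eq k l m : k < m -> l < m -> FF k l m = if k <= l then x ++ y else y ++ x.
Proof. by move=> Hk Hl; rewrite FF_gen Hk Hl. Qed.

Variables u v : seq S.

Definition seqA m pad k : seq (option S) :=
  map Some u ++ flatten [seq blockA (j == k) | j <- iota 0 m] ++ nseq (size v + pad) None.
Definition seqB m pad l : seq (option S) :=
  nseq (size u) None ++ flatten [seq blockB (j == l) | j <- iota 0 m] ++ map Some v ++ nseq pad None.

Lemma size_seqA m pad k : size (seqA m pad k) = size u + m * (size x + size y) + size v + pad.
Proof.
rewrite /seqA !size_cat size_map size_nseq (size_flat _ (fun b => size_blockA (b == k))) size_iota.
lia.
Qed.
Lemma size_seqB m pad k : size (seqB m pad k) = size u + m * (size x + size y) + size v + pad.
Proof.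
rewrite /seqB !size_cat size_map !size_nseq (size_flat _ (fun b => size_blockB (b == k))) size_iota.
lia.
Qed.

Lemma il_seq m pad k l : il (seqA m pad k) (seqB m pad l) = u ++ FF k l m ++ v.
Proof.
have Hs : forall j, size (blockA (j == k)) = size (blockB (j == l)).
  by move=> j; rewrite size_blockA size_blockB.
have [H1 H2] := il_flat (iota 0 m) Hs.
rewrite /seqA /seqB il_cat ?size_map ?size_nseq // il_SN' //.
rewrite il_cat // H1 nseqD il_cat ?size_nseq ?size_map // il_NS' // il_NN cats0.
congr (_ ++ _ ++ _); rewrite /FF; congr flatten; apply: eq_map => j; exact: il_block.
Qed.

End Blocks.

Lemma C1_ge (X Y : finType) (f : X -> Y -> bool) m (A : 'I_m -> X) (B : 'I_m -> Y) :
  m <= #|{: {set X} * {set Y}}| ->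
  (forall k, f (A k) (B k)) ->
  (forall k l, k != l -> ~~ f (A k) (B l) || ~~ f (A l) (B k)) ->
  m <= C1 f.
Proof.
move=> HD Hdiag Hoff; rewrite /C1.
apply: (big_ind (fun z => m <= z)) => //.
  by move=> a b Ha Hb; rewrite leq_min Ha Hb.
move=> R /andP[/forallP H1 /forallP H2].
pose g k := odflt (set0, set0) [pick r in R | (A k \in r.1) && (B k \in r.2)].
have Hg : forall k, [&& g k \in R, A k \in (g k).1 & B k \in (g k).2].
  move=> k; rewrite /g; case: pickP => [r /andP[-> ->] //|H0].
  have := H2 (A k) => /forallP /(_ (B k)); rewrite Hdiag /= => /existsP[r].
  by rewrite H0.
have Hin : forall r, r \in R -> forall x, x \in r.1 -> forall y, y \in r.2 -> f x y.
  move=> r Hr x Hx y Hy.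
  by move: (H1 r); rewrite Hr /= => /forallP /(_ x); rewrite Hx /= => /forallP /(_ y); rewrite Hy.
have ginj : injective g.
  move=> k l Hkl; apply/eqP; apply/negPn/negP => Hne.
  have /and3P[Rk Ak Bk] := Hg k; have /and3P[Rl Al Bl] := Hg l.
  rewrite Hkl in Rk Ak Bk.
  have := Hoff k l Hne; rewrite (Hin _ Rl _ Ak _ Bl) (Hin _ Rl _ Al _ Bk) //.
have -> : m = #|[set g k | k in 'I_m]| by rewrite card_imset // card_ord.
apply: subset_leq_card; apply/subsetP => r /imsetP[k _ ->].
by have /and3P[] := Hg k.
Qed.

Lemma lower (S : finType) (L : seq S -> bool) (x y u v : seq S) (a : S) n m :
  L (u ++ (x ++ y) ++ v) -> ~~ L (u ++ (y ++ x) ++ v) -> 0 < size x ->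
  size u + m * (size x + size y) + size v <= n ->
  m <= C1 (fun X Y : {ffun 'I_n -> option S} => L (interleave X Y)).
Proof.
move=> H1 H0 Hx Hn.
set pad := n - (size u + m * (size x + size y) + size v).
have HA : forall k, size (seqA x y u v m pad k) = n by move=> k; rewrite size_seqA; lia.
have HB : forall k, size (seqB x y u v m pad k) = n by move=> k; rewrite size_seqB; lia.
pose Af (k : 'I_m) := [ffun i : 'I_n => nth None (seqA x y u v m pad k) i].
pose Bf (k : 'I_m) := [ffun i : 'I_n => nth None (seqB x y u v m pad k) i].
have Hf : forall k l : 'I_m, L (interleave (Af k) (Bf l)) = L (u ++ FF x y k l m ++ v).
  by move=> k l; rewrite /Af /Bf interleave_il // il_seq.
have Hmn : m <= n by nia.
apply: (C1_ge (A := Af) (B := Bf)).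
- pose e (k : 'I_m) := [ffun i : 'I_n => if val i == val k then Some a else None].
  have einj : injective (fun k => ([set e k], (set0 : {set {ffun 'I_n -> option S}}))).
    move=> k l [] /set1_inj Hkl.
    have Hk : val k < n by apply: leq_trans (ltn_ord k) Hmn.
    have := congr1 (fun F : {ffun 'I_n -> option S} => F (Ordinal Hk)) Hkl; rewrite /e !ffunE /= eqxx.
    by case: eqP => // /val_inj.
  by have := leq_card _ einj; rewrite card_ord.
- by move=> k; rewrite Hf FF_eq // leqnn.
- move=> k l Hkl; rewrite !Hf !FF_eq //.
  case: (ltngtP k l) => H.
  + by rewrite H0 orbT.
  + by rewrite H0.
  + by move: Hkl; rewrite (val_inj H) eqxx.
Qed.

Lemma bigmin_le (I : eqType) (r : seq I) (P : pred I) (F : I -> nat) D i0 :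
  i0 \in r -> P i0 -> \big[minn/D]_(i <- r | P i) F i <= F i0.
Proof.
elim: r => // j r IH; rewrite inE big_cons => /orP[/eqP <-|Hr] HP.
  by rewrite HP geq_minl.
case: ifP => _; last exact: IH.
by rewrite geq_min IH ?orbT.
Qed.

Lemma comm_shuffle (S : finType) (L : seq S -> bool) (T : Type) (a b : T -> seq S) :
  in_Com L -> forall (s : seq T) (u v : seq S),
  L (u ++ flatten (map (fun t => a t ++ b t) s) ++ v) =
  L (u ++ flatten (map a s) ++ flatten (map b s) ++ v).
Proof.
move=> Hc; elim=> [|t s IH] u v //=.
rewrite -!catA (catA u) (catA (u ++ a t)) IH -!catA.
have := Hc (b t) (flatten (map a s)) (u ++ a t) (flatten (map b s) ++ v).
by rewrite -!catA => <-.
Qed.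

Lemma upper (S : finType) (L : seq S -> bool) (A : dfa S) :
  (forall w, L w = dfa_accepts A w) -> in_Com L ->
  forall n, N1L L n <= up_log 2 #|dfa_state A|.
Proof.
move=> HA Hc n; rewrite /N1L /N1; apply: leq_up_log.
pose wd (z : {ffun 'I_n -> option S}) := flatten (map (fun i => oword (z i)) (enum 'I_n)).
pose run (w : seq S) (q : dfa_state A) := foldl (@dfa_step S A) q w.
pose rect (q : dfa_state A) : {set {ffun 'I_n -> option S}} * {set {ffun 'I_n -> option S}} :=
  ([set z : {ffun 'I_n -> option S} | run (wd z) (dfa_start A) == q],
   [set z : {ffun 'I_n -> option S} | dfa_accept (run (wd z) q)]).
pose R := [set rect q | q : dfa_state A].
have Hf : forall z1 z2 : {ffun 'I_n -> option S}, L (interleave z1 z2) = dfa_accept (run (wd z2) (run (wd z1) (dfa_start A))).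
  move=> z1 z2; rewrite /interleave.
  have := comm_shuffle (fun i => oword (z1 i)) (fun i => oword (z2 i)) Hc (enum 'I_n) [::] [::].
  by rewrite /= !cats0 => ->; rewrite HA /dfa_accepts foldl_cat.
have Hcov : is_one_cover (fun z1 z2 : {ffun 'I_n -> option S} => L (interleave z1 z2)) R.
  apply/andP; split.
    apply/forallP => r; apply/implyP => /imsetP[q _ ->].
    apply/forallP => z1; apply/implyP; rewrite inE => /eqP H1.
    apply/forallP => z2; apply/implyP; rewrite inE => H2.
    by rewrite Hf H1.
  apply/forallP => z1; apply/forallP => z2; apply/implyP => Hz.
  apply/existsP; exists (rect (run (wd z1) (dfa_start A))).
  rewrite imset_f //= !inE eqxx /=.
  by rewrite -Hf.
apply: leq_trans (leq_imset_card _ _); rewrite ?cardsT.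
rewrite /C1; exact: (bigmin_le _ _ (mem_index_enum R) Hcov).
Qed.

Lemma trunc_le_up n : trunc_log 2 n <= up_log 2 n.
Proof.
case: n => [|n]; first by rewrite trunc_log0.
have h1 := @trunc_logP 2 n.+1 isT isT.
have h2 := @up_logP 2 n.+1 isT.
by rewrite -(@leq_exp2l 2) //; apply: leq_trans h1 h2.
Qed.

Lemma omega_part (S : finType) (L : seq S -> bool) : ~ in_Com L -> omega_log (N1L L).
Proof.
move=> Hnc.
have [x [y [u [v Hne]]]] : exists x y u v,
    L (u ++ (x ++ y) ++ v) != L (u ++ (y ++ x) ++ v).
  apply: NNPP => H; apply: Hnc => x y u v.
  case: (eqVneq (L (u ++ (x ++ y) ++ v)) (L (u ++ (y ++ x) ++ v))) => // Hne.
  by exfalso; apply: H; exists x, y, u, v.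
have [x' [y' [H1 [H0 Hx]]]] : exists x' y', L (u ++ (x' ++ y') ++ v) /\
    ~~ L (u ++ (y' ++ x') ++ v) /\ 0 < size x'.
  have Hs : forall x' y', L (u ++ (x' ++ y') ++ v) != L (u ++ (y' ++ x') ++ v) -> 0 < size x'.
    by move=> x' y'; case: x' => //=; rewrite cats0 eqxx.
  case E : (L (u ++ (x ++ y) ++ v)).
    exists x, y; split => //; split; first by move: Hne; rewrite E; case: (L (u ++ (y ++ x) ++ v)).
    by apply: Hs Hne.
  exists y, x; split; first by move: Hne; rewrite E; case: (L (u ++ (y ++ x) ++ v)).
  split; first by rewrite E.
  by apply: (Hs y x); rewrite eq_sym.
case: x' H1 H0 Hx => // a x'' H1 H0 _.
set x' := a :: x'' in H1 H0.
set K := size x' + size y'.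
have HK : 0 < K by rewrite /K /x' /=.
set c0 := size u + size v.
exists (K + c0).+1, (c0 + 2 * K) => n Hn.
set m := (n - c0) %/ K.
have HmK : m * K <= n - c0 by apply: leq_trunc_div.
have Hm2 : 2 <= m.
  have : (2 * K) %/ K <= m by apply: leq_div2r; lia.
  by rewrite mulnK.
have Hlow : m <= C1 (fun X Y : {ffun 'I_n -> option S} => L (interleave X Y)).
  apply: (lower (x := x') (y := y') (u := u) (v := v) a) => //.
  rewrite -/K; move: HmK Hn; rewrite /c0; lia.
have Hceil : n - c0 < m.+1 * K by apply: ltn_ceil.
set l := trunc_log 2 m.
have Hl1 : 0 < l by rewrite /l trunc_log_gt0.
have Hml : m.+1 <= 2 ^ l.+1 by apply: trunc_log_ltn.
have HD : K + c0 < 2 ^ (K + c0) by apply: ltn_expl.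
have Hn2 : n < 2 ^ (l.+1 + (K + c0)).
  rewrite expnD.
  have : n < m.+1 * (K + c0) by nia.
  move=> h; apply: (leq_trans h); apply: leq_mul => //; exact: ltnW.
have Htn : trunc_log 2 n <= l + (K + c0).
  have h := @trunc_logP 2 n isT ltac:(lia).
  have : 2 ^ trunc_log 2 n < 2 ^ (l.+1 + (K + c0)) by apply: leq_ltn_trans h Hn2.
  rewrite ltn_exp2l //; lia.
have HlN : l <= N1L L n.
  rewrite /N1L /N1; apply: leq_trans (trunc_le_up _).
  exact: leq_trunc_log.
nia.
Qed.

Theorem mainTheorem7 (S : finType) (L : seq S -> bool) (HL : regular L) :
  (bounded (N1L L) <-> in_Com L) /\ (~ in_Com L -> omega_log (N1L L)).
Proof.
split; last exact: omega_part.
split.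
- move=> [B HB]; apply: NNPP => Hnc.
  have [c [N0 H]] := omega_part Hnc.
  have := H (N0 + 2 ^ (c * B).+1) (leq_addr _ _).
  have := @trunc_log_max 2 (N0 + 2 ^ (c * B).+1) (c * B).+1 isT (leq_addl _ _).
  have := HB (N0 + 2 ^ (c * B).+1).
  move=> h1 h2 h3.
  have : c * N1L L (N0 + 2 ^ (c * B).+1) <= c * B by rewrite leq_mul2l h1 orbT.
  lia.
- move=> Hc; have [A HA] := HL; exists (up_log 2 #|dfa_state A|).
  exact: upper.
Qed.
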